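(* Let $m\ge1$ and let $P_1\ge\dots\ge P_{2^m}>0$ be the probabilities of i.i.d. input words $\mathbf{w}_1,\dots,\mathbf{w}_{2^m}$, and $P_1^d\ge\dots\ge P^d_{2^m}>0$. After $t$ data words, let $\mathbf{n}^e(t)=(n_1^e(t),\dots,n^e_{2^m}(t))$ be the vector of counts of the input words, so that $$P(\mathbf{n}^e(t))=\binom{t}{n^e_1(t),\ldots,n^e_{2^m}(t)}P_1^{n^e_1(t)}\cdots P_{2^m}^{n^e_{2^m}(t)},$$ and assume the first $t$ words are encoded and decoded correctly, so the decoder counts equal $\mathbf{n}^e(t)$. Call a count vector stable if $n^e_1(t)>n^e_2(t)>\dots>n^e_{2^m}(t)$. For a stable count vector $\mathbf{n}$, with $N_i=n_i-n_{i+1}$, define $$A(\mathbf{n})=4-\prod_{i=1}^{2^{m-1}}\left(1-\left(\tfrac{P_{2i}}{P_{2i-1}}\right)^{N_{2i-1}}\right)-\prod_{i=1}^{2^{m-1}-1}\left(1-\left(\tfrac{P_{2i+1}}{P_{2i}}\right)^{N_{2i}}\right)-\prod_{i=1}^{2^{m-1}}\left(1-\left(\tfrac{P^d_{2i}}{P^d_{2i-1}}\right)^{N_{2i-1}}\right)-\prod_{i=1}^{2^{m-1}-1}\left(1-\left(\tfrac{P^d_{2i+1}}{P^d_{2i}}\right)^{N_{2i}}\right).$$ Assume that, conditioned on a stable count vector $\mathbf{n}^e(t)=\mathbf{n}$, the probability that a recurrence (two adjacent encoder counts, or two adjacent decoder counts, becoming equal at some future time) occurs is at most $A(\mathbf{n})$.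 Let $P(t)$ be the probability that the dictionary will be unstable, i.e. that $\mathbf{n}^e(t)$ is not stable or a recurrence occurs after time $t$. Then $$P(t)\le\sum_{\mathbf{n}^e(t)\ \text{stable}}A(\mathbf{n}^e(t))P(\mathbf{n}^e(t))+\sum_{\mathbf{n}^e(t)\ \text{not stable}}P(\mathbf{n}^e(t)).$$
   Context: Setting: a rate-1 SLC direct shaping code with parsing length $m$: the encoder keeps the $2^m$ input words ordered by their occurrence counts and maps the word in position $k$ to the $k$th output codeword of a fixed list ordered by nondecreasing cost (number of zeros); the decoder rebuilds the same ordering from the decoded words. Codewords pass through a binary symmetric channel with crossover probability $\rho$, and $P_i^d=\sum_j\rho^{d(i,j)}(1-\rho)^{m-d(i,j)}P_j$ with $d$ the Hamming distance. The conditional bound by $A(\mathbf{n})$ is the paper's Lemma on recurrence of a stable dictionary, stated here as a hypothesis. *)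

(* Defs.v *)
From HB Require Import structures.
From mathcomp Require Import all_boot all_order all_algebra.
From mathcomp Require Import all_classical all_reals all_analysis.

Set Implicit Arguments.
Unset Strict Implicit.
Unset Printing Implicit Defensive.

Import Order.TTheory GRing.Theory Num.Theory.
Local Open Scope ring_scope.

(* Input words are indexed 0-based: word index j (0 <= j < 2^m) corresponds to
   the paper's index j+1.  Probabilities are given as functions nat -> R
   (only values at j < 2^m matter). *)

Definition wcount (M : nat) (w : nat -> 'I_M) (t j : nat) : nat :=
  count (fun k => nat_of_ord (w k) == j) (iota 0 t).

Definition ecount (T : Type) (M : nat) (w : nat -> T -> 'I_M) (s : nat) (x : T)
  : nat -> nat := fun j => wcount (fun k => w k x) s j.

Definition stable (M : nat) (q : nat -> nat) : bool :=
  all (fun j => (q j.+1 < q j)%N) (iota 0 M.-1).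

Definition Aterm (R : realFieldType) (p : nat -> R) (q : nat -> nat) (j : nat) : R :=
  1 - (p j.+1 / p j) ^+ (q j - q j.+1)%N.

Definition Abound (R : realFieldType) (m : nat) (p pd : nat -> R) (q : nat -> nat) : R :=
  4 - \prod_(i < (2 ^ m.-1)%N) Aterm p q (2 * i)%N
    - \prod_(i < (2 ^ m.-1 - 1)%N) Aterm p q (2 * i).+1
    - \prod_(i < (2 ^ m.-1)%N) Aterm pd q (2 * i)%N
    - \prod_(i < (2 ^ m.-1 - 1)%N) Aterm pd q (2 * i).+1.

Definition fnat (M t : nat) (n : {ffun 'I_M -> 'I_t.+1}) : nat -> nat :=
  fun j => nth 0%N [seq nat_of_ord (n i) | i <- enum 'I_M] j.

Definition multprob (R : realFieldType) (M t : nat) (p : nat -> R)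
  (n : {ffun 'I_M -> 'I_t.+1}) : R :=
  (t`!)%:R / (\prod_(i < M) (n i)`!)%:R * \prod_(i < M) p i ^+ n i.

Definition hdist (a b : seq bool) : nat :=
  count id [seq xy.1 != xy.2 | xy <- zip a b].
Definition cost (a : seq bool) : nat := count negb a.

Definition Pdec (R : realFieldType) (m M : nat) (rho : R)
  (c : 'I_M -> m.-tuple bool) (p : nat -> R) : nat -> R :=
  fun j => \sum_(i < M | nat_of_ord i == j)
     \sum_(k < M) rho ^+ hdist (c i) (c k)
                   * (1 - rho) ^+ (m - hdist (c i) (c k))%N * p k.

Definition countev (T : Type) (M t : nat) (w : nat -> T -> 'I_M)
  (n : {ffun 'I_M -> 'I_t.+1}) : set T :=
  [set x | forall i : 'I_M, ecount w t x i = n i].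

Definition recurrence (T : Type) (M : nat) (w wd : nat -> T -> 'I_M) (t : nat)
  : set T :=
  [set x | exists s, (t < s)%N /\ exists j, (j.+1 < M)%N /\
      (ecount w s x j = ecount w s x j.+1 \/ ecount wd s x j = ecount wd s x j.+1)].

(* Main.v *)
Require Import Defs.
From HB Require Import structures.
From mathcomp Require Import all_boot all_order all_algebra.
From mathcomp Require Import all_classical all_reals all_analysis.
From mathcomp Require Import ring lra zify.
Import Order.TTheory GRing.Theory Num.Theory.
Local Open Scope ring_scope.
Local Open Scope classical_set_scope.
Set Implicit Arguments.
Unset Strict Implicit.
Unset Printing Implicit Defensive.

Definition fv (T : Type) (M s : nat) (v : nat -> T -> 'I_M) (x : T) : {ffun 'I_s -> 'I_M} :=
  [ffun l : 'I_s => v l x].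
Definition cnt (M s : nat) (f : {ffun 'I_s -> 'I_M}) (j : nat) : nat :=
  (\sum_(l < s) (nat_of_ord (f l) == j))%N.
Definition cyl (T : Type) (M s : nat) (v : nat -> T -> 'I_M) (f : {ffun 'I_s -> 'I_M}) : set T :=
  [set x | forall l : 'I_s, v l x = f l].

Lemma ecountE (T : Type) (M s : nat) (v : nat -> T -> 'I_M) x j :
  ecount v s x j = cnt (fv s v x) j.
Proof.
rewrite /ecount /wcount /cnt -sum1_count big_mkcond /=.
under [RHS]eq_bigr => k _ do rewrite /fv ffunE.
rewrite -(big_mkord xpredT (fun k => (nat_of_ord (v k x) == j : nat))) /index_iota subn0.
apply: eq_bigr => k _; by case: ifP.
Qed.

Lemma cyl_fv (T : Type) (M s : nat) (v : nat -> T -> 'I_M) f x :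
  cyl v f x <-> fv s v x = f.
Proof.
split => [h|<- l]; last by rewrite ffunE.
by apply/ffunP => l; rewrite ffunE h.
Qed.

Lemma measurable_cyl d (T : measurableType d) (M s : nat) (v : nat -> T -> 'I_M)
  (hv : forall k i, measurable (v k @^-1` [set i])) (f : {ffun 'I_s -> 'I_M}) :
  measurable (cyl v f).
Proof.
have -> : cyl v f = \bigcap_(l in [set: 'I_s]) (v l @^-1` [set f l]).
  apply/seteqP; split => x /= h l; first by move=> _; apply: h.
  exact: h.
by apply: fin_bigcap_measurable => //; exact: finite_finset.
Qed.

Lemma measurable_fv2 d (T : measurableType d) (M s : nat) (v v' : nat -> T -> 'I_M)
  (hv : forall k i, measurable (v k @^-1` [set i]))
  (hv' : forall k i, measurable (v' k @^-1` [set i]))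
  (Q : {ffun 'I_s -> 'I_M} -> {ffun 'I_s -> 'I_M} -> bool) :
  measurable [set x | Q (fv s v x) (fv s v' x)].
Proof.
have -> : [set x | Q (fv s v x) (fv s v' x)] =
  \bigcup_(fg in [set fg : {ffun 'I_s -> 'I_M} * {ffun 'I_s -> 'I_M} | Q fg.1 fg.2])
     (cyl v fg.1 `&` cyl v' fg.2).
  apply/seteqP; split => x /=.
    by move=> hQ; exists (fv s v x, fv s v' x) => //; split; apply/cyl_fv.
  by move=> [[f g] /= hQ [/cyl_fv -> /cyl_fv ->]].
apply: fin_bigcup_measurable; first exact: finite_finset.
by move=> fg _; apply: measurableI; apply: measurable_cyl.
Qed.
Definition ext (A : finType) s (g : {ffun 'I_s -> A}) (a : A) : {ffun 'I_s.+1 -> A} :=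
  [ffun l => if unlift ord_max l is Some l' then g l' else a].

Lemma ext_widen (A : finType) s (g : {ffun 'I_s -> A}) a (l : 'I_s) :
  ext g a (widen_ord (leqnSn s) l) = g l.
Proof.
have -> : widen_ord (leqnSn s) l = lift ord_max l by apply: val_inj => /=; rewrite /bump leqNgt ltn_ord.
by rewrite /ext ffunE liftK.
Qed.

Lemma ext_max (A : finType) s (g : {ffun 'I_s -> A}) a : ext g a ord_max = a.
Proof. by rewrite /ext ffunE unlift_none. Qed.

Lemma sum_ffunS (R : realFieldType) (A : finType) s (H : {ffun 'I_s.+1 -> A} -> R) :
  \sum_(f : {ffun 'I_s.+1 -> A}) H f =
  \sum_(g : {ffun 'I_s -> A}) \sum_(a : A) H (ext g a).
Proof.
rewrite pair_big /=.
rewrite (reindex (fun u : {ffun 'I_s -> A} * A => ext u.1 u.2)) //.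
apply: onW_bij.
exists (fun f : {ffun 'I_s.+1 -> A} => ([ffun l => f (lift ord_max l)], f ord_max)).
  move=> [g a] /=; congr (_, _); last exact: ext_max.
  by apply/ffunP => l; rewrite ffunE /ext ffunE liftK.
move=> f; apply/ffunP => l; rewrite /ext ffunE /=.
by case: unliftP => [j ->|->]; rewrite ?ffunE.
Qed.

Lemma cnt_ext M s (g : {ffun 'I_s -> 'I_M}) a j :
  cnt (ext g a) j = (cnt g j + (nat_of_ord a == j))%N.
Proof.
rewrite /cnt big_ord_recr /= ext_max; congr (_ + _)%N.
by apply: eq_bigr => l _; rewrite ext_widen.
Qed.

Lemma prod_ext (R : realFieldType) M s (g : {ffun 'I_s -> 'I_M}) a (F : 'I_M -> R) :
  \prod_(l < s.+1) F (ext g a l) = \prod_(l < s) F (g l) * F a.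
Proof.
rewrite big_ord_recr /= ext_max; congr (_ * _).
by apply: eq_bigr => l _; rewrite ext_widen.
Qed.

Lemma fact_split M (n : 'I_M -> nat) a : (0 < n a)%N ->
  (\prod_i (n i)`!)%N = ((\prod_i (n i - (a == i))`!) * n a)%N.
Proof.
move=> ha; rewrite [in LHS](bigD1 a) //= [X in (_ = X * _)%N](bigD1 a) //= eqxx.
have -> : (\prod_(i < M | i != a) (n i - (a == i))`! = \prod_(i < M | i != a) (n i)`!)%N.
  by apply: eq_bigr => i; rewrite eq_sym => /negPf ->; rewrite subn0.
case: (n a) ha => // k _; rewrite factS subn1 /=; ring.
Qed.

Lemma pow_split (R : realFieldType) M (p : nat -> R) (n : 'I_M -> nat) a : (0 < n a)%N ->
  \prod_(i < M) p i ^+ n i = \prod_(i < M) p i ^+ (n i - (a == i)) * p a.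
Proof.
move=> ha; rewrite [in LHS](bigD1 a) //= [X in (_ = X * _)](bigD1 a) //= eqxx.
have -> : \prod_(i < M | i != a) p (nat_of_ord i) ^+ (n i - (a == i)) = \prod_(i < M | i != a) p (nat_of_ord i) ^+ n i.
  by apply: eq_bigr => i; rewrite eq_sym => /negPf ->; rewrite subn0.
case: (n a) ha => // k _; rewrite subn1 /= exprS; ring.
Qed.

Lemma sum_split M (n : 'I_M -> nat) a s : (0 < n a)%N -> (\sum_i n i)%N = s.+1 ->
  (\sum_i (n i - (a == i)))%N = s.
Proof.
move=> ha; rewrite (bigD1 a) //= [X in _ -> X = _](bigD1 a) //= eqxx.
have -> : (\sum_(i < M | i != a) (n i - (a == i)) = \sum_(i < M | i != a) n i)%N.
  by apply: eq_bigr => i; rewrite eq_sym => /negPf ->; rewrite subn0.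
case: (n a) ha => // k _; rewrite subn1 /= addSn; by case.
Qed.

Lemma multinom (R : realFieldType) M (p : nat -> R) s (n : 'I_M -> nat) :
  (\sum_i n i)%N = s ->
  \sum_(f : {ffun 'I_s -> 'I_M} | [forall i : 'I_M, cnt f i == n i]) \prod_(l < s) p (f l)
  = (s`!)%:R / (\prod_(i < M) (n i)`!)%:R * \prod_(i < M) p i ^+ n i.
Proof.
elim: s n => [|s IH] n hn.
  have n0 : forall i, n i = 0%N.
    move=> i; apply/eqP; move/eqP: hn; rewrite sum_nat_eq0 => /forallP h.
    exact: (implyP (h i) isT).
  rewrite (big_pred1 (ffun0 (card_ord 0))); last first.
    move=> f /=; apply/idP/idP.
      by move=> _; apply/eqP/ffunP => -[].
    by move=> _; apply/forallP => i; rewrite /cnt big_ord0 n0.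
  rewrite big_ord0 !big1 //= ?mulr1 ?divr1 // => i _; by rewrite n0.
rewrite big_mkcond sum_ffunS exchange_big /=.
rewrite (eq_bigr (fun a : 'I_M => (n a)%:R * ((s.+1`!)%:R / (\prod_(i < M) (n i)`!)%:R
   * \prod_(i < M) p i ^+ n i) / (s.+1)%:R)); last first.
  move=> a _; case: (posnP (n a)) => ha.
    rewrite ha mul0r mul0r big1 // => g _; rewrite ifF //.
    apply/negbTE/negP => /forallP /(_ a); by rewrite cnt_ext eqxx ha addn1.
  set n' := fun i : 'I_M => (n i - (a == i))%N.
  rewrite (eq_bigr (fun g => if [forall i : 'I_M, cnt g i == n' i] then \prod_(l < s) p (g l) * p a else 0)); last first.
    move=> g _; rewrite (prod_ext g a (fun x : 'I_M => p x)); congr (if _ then _ else _).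
    have E : forall i : 'I_M, (nat_of_ord a == nat_of_ord i) = (a == i) by [].
    apply/forallP/forallP => h i; move: (h i); rewrite cnt_ext E /n'.
      by move=> /eqP <-; rewrite addnK.
    case: (a =P i) => [<-|_]; rewrite ?addn0 ?subn0 // => /eqP ->.
    by rewrite subnK.
  rewrite -big_mkcond -big_distrl /= IH; last exact: sum_split.
  rewrite (fact_split ha) (pow_split p ha) factS !natrM.
  have h1 : ((\prod_(i < M) (n' i)`!)%:R : R) != 0.
    by rewrite pnatr_eq0 -lt0n prodn_gt0 // => i; rewrite fact_gt0.
  have h2 : ((n a)%:R : R) != 0 by rewrite pnatr_eq0 -lt0n.
  have h3 : ((s.+1)%:R : R) != 0 by rewrite pnatr_eq0.
  rewrite /n' in h1 *; field; by rewrite ?h1 ?h2 ?h3 //= andbT addrC natr1 pnatr_eq0.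
set C := _ * \prod_(i < M) p i ^+ n i.
rewrite -[RHS]mul1r.
set k := ((s.+1)%:R : R).
have hk : k != 0 by rewrite pnatr_eq0.
have hsum : (\sum_(i < M) (n i)%:R : R) = k by rewrite -natr_sum hn.
rewrite -[in RHS](mulfV hk) -[in RHS]hsum mulr_suml mulr_suml.
apply: eq_bigr => i _; rewrite hsum; field; by rewrite addrC natr1 pnatr_eq0.
Qed.

Lemma fsbig_fin (R : realType) (I : finType) (Q : pred I) (g : I -> \bar R) :
  (\sum_(i \in [set i | Q i]) g i = \sum_(i | Q i) g i)%E.
Proof.
rewrite (fsbigE [seq i <- enum I | Q i]) ?filter_uniq ?enum_uniq //.
- rewrite big_filter_cond big_enum_cond /=; apply: eq_bigl => i.
  by rewrite mem_setE andbb.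
- by rewrite -enumT enum_uniq.
- by move=> i /=; rewrite mem_filter => /andP[].
- by move=> i /= hi; rewrite mem_filter mem_enum hi.
Qed.

Lemma countev_eq (T : Type) M t (w : nat -> T -> 'I_M) (n : {ffun 'I_M -> 'I_t.+1}) :
  countev w n = \bigcup_(f in [set f : {ffun 'I_t -> 'I_M} | [forall i : 'I_M, cnt f i == n i]]) cyl w f.
Proof.
apply/seteqP; split => x /=.
  move=> h; exists (fv t w x); last exact/cyl_fv.
  by apply/forallP => i; rewrite -ecountE h.
by move=> [f /forallP hf /cyl_fv hx] i; rewrite ecountE hx; apply/eqP/hf.
Qed.

Lemma Pcountev (R : realType) d (T : measurableType d) (P : probability T R) M t
  (p : nat -> R) (w : nat -> T -> 'I_M)
  (hw : forall k i, measurable (w k @^-1` [set i]))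
  (hP : forall (k : nat) (s : 'I_k -> 'I_M),
     P [set x | forall l : 'I_k, w l x = s l] = (\prod_(l < k) p (s l))%:E)
  (n : {ffun 'I_M -> 'I_t.+1}) :
  (\sum_(i < M) nat_of_ord (n i))%N = t ->
  P (countev w n) = (multprob p n)%:E.
Proof.
move=> hn; rewrite countev_eq measure_fin_bigcup //.
- rewrite fsbig_fin.
  rewrite (eq_bigr (fun f : {ffun 'I_t -> 'I_M} => (\prod_(l < t) p (f l))%:E)); last by move=> f _; exact: (hP t f).
  rewrite sumEFin; congr (_%:E).
  by rewrite (multinom p (n := fun i => nat_of_ord (n i)) hn).
- exact: finite_finset.
- by move=> f g _ _ [x [/cyl_fv hf /cyl_fv hg]]; rewrite -hf -hg.
- by move=> f _; apply: measurable_cyl.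
Qed.

Lemma fnat_lt M t (n : {ffun 'I_M -> 'I_t.+1}) j (hj : (j < M)%N) :
  fnat n j = n (Ordinal hj).
Proof.
rewrite /fnat (nth_map (Ordinal hj)) ?size_enum_ord //.
congr (nat_of_ord (n _)); exact: (nth_ord_enum (Ordinal hj) (Ordinal hj)).
Qed.

Lemma stable_countev (T : Type) M t (w : nat -> T -> 'I_M) (n : {ffun 'I_M -> 'I_t.+1}) x :
  countev w n x -> stable M (ecount w t x) = stable M (fnat n).
Proof.
move=> h; rewrite /stable; apply: eq_in_all => j; rewrite mem_iota add0n => /andP[_ hj].
have hj1 : (j.+1 < M)%N by lia.
have hj0 : (j < M)%N by apply: ltnW.
rewrite (fnat_lt n hj1) (fnat_lt n hj0).
by rewrite (h (Ordinal hj1)) (h (Ordinal hj0)).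
Qed.

Lemma ecount_le (T : Type) M t (w : nat -> T -> 'I_M) x j : (ecount w t x j <= t)%N.
Proof. by rewrite /ecount /wcount (leq_trans (count_size _ _)) // size_iota. Qed.

Lemma sum_ecount (T : Type) M t (w : nat -> T -> 'I_M) x :
  (\sum_(i < M) ecount w t x i)%N = t.
Proof.
under eq_bigr => i _ do rewrite ecountE /cnt.
rewrite exchange_big /=.
rewrite (eq_bigr (fun _ => 1%N)); first by rewrite sum1_card card_ord.
move=> l _; rewrite (bigD1 (fv t w x l)) //= eqxx big1 // => i.
move=> hi; case: eqP => // /val_inj hh; by rewrite hh eqxx in hi.
Qed.

Lemma countev_disj (T : Type) M t (w : nat -> T -> 'I_M) (n n' : {ffun 'I_M -> 'I_t.+1}) x :
  countev w n x -> countev w n' x -> n = n'.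
Proof.
move=> h h'; apply/ffunP => i; apply: val_inj => /=.
by rewrite -(h i) -(h' i).
Qed.

Lemma measurable_rec d (T : measurableType d) M t (w wd : nat -> T -> 'I_M)
  (hw : forall k i, measurable (w k @^-1` [set i]))
  (hwd : forall k i, measurable (wd k @^-1` [set i])) :
  measurable (recurrence w wd t).
Proof.
have -> : recurrence w wd t = \bigcup_(s : nat)
   [set x | (fun (f g : {ffun 'I_s -> 'I_M}) => (t < s)%N &&
      [exists j : 'I_M, (j.+1 < M)%N &&
         ((cnt f j == cnt f j.+1) || (cnt g j == cnt g j.+1))]) (fv s w x) (fv s wd x)].
  apply/seteqP; split => x /=.
    move=> [s [hs [j [hj hor]]]]; exists s => //=; rewrite hs /=.
    apply/existsP; exists (Ordinal (ltnW hj)); rewrite /= hj /=.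
    by rewrite -!ecountE; case: hor => ->; rewrite eqxx ?orbT.
  move=> [s _ /andP[hs /existsP[j /andP[hj hor]]]]; exists s; split => //.
  exists j; split => //.
  by rewrite !ecountE; case/orP: hor => /eqP ->; [left|right].
apply: bigcupT_measurable => s.
exact: (measurable_fv2 hw hwd (fun (f g : {ffun 'I_s -> 'I_M}) => (t < s)%N && [exists j : 'I_M, (j.+1 < M)%N && ((cnt f j == cnt f j.+1) || (cnt g j == cnt g j.+1))])).
Qed.
Theorem theorem3 (R : realType) (d : measure_display) (T : measurableType d)
  (P : probability T R) (m : nat) (p : nat -> R) (rho : R)
  (c : 'I_(2 ^ m) -> m.-tuple bool) (w wd : nat -> T -> 'I_(2 ^ m)) (t : nat) :
  (1 <= m)%N ->
  0 <= rho <= 1 ->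
  injective c ->
  (forall i j : 'I_(2 ^ m), (i <= j)%N -> (cost (c i) <= cost (c j))%N) ->
  (forall j, (j.+1 < 2 ^ m)%N -> p j.+1 <= p j) ->
  (forall j, (j < 2 ^ m)%N -> 0 < p j) ->
  (forall j, (j.+1 < 2 ^ m)%N -> Pdec rho c p j.+1 <= Pdec rho c p j) ->
  (forall j, (j < 2 ^ m)%N -> 0 < Pdec rho c p j) ->
  (forall k i, measurable (w k @^-1` [set i])) ->
  (forall k i, measurable (wd k @^-1` [set i])) ->
  (forall (k : nat) (s : 'I_k -> 'I_(2 ^ m)),
     P [set x | forall l : 'I_k, w l x = s l] = (\prod_(l < k) p (s l))%:E) ->
  (forall k x, (k < t)%N -> wd k x = w k x) ->
  (forall n : {ffun 'I_(2 ^ m) -> 'I_t.+1}, stable (2 ^ m) (fnat n) ->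
     (P (recurrence w wd t `&` countev w n)
       <= (Abound m p (Pdec rho c p) (fnat n))%:E * P (countev w n))%E) ->
  (P [set x | ~~ stable (2 ^ m) (ecount w t x) \/ recurrence w wd t x]
    <= (\sum_(n : {ffun 'I_(2 ^ m) -> 'I_t.+1}
              | ((\sum_(i < 2 ^ m) nat_of_ord (n i))%N == t) && stable (2 ^ m) (fnat n))
           Abound m p (Pdec rho c p) (fnat n) * multprob p n
        + \sum_(n : {ffun 'I_(2 ^ m) -> 'I_t.+1}
              | ((\sum_(i < 2 ^ m) nat_of_ord (n i))%N == t) && ~~ stable (2 ^ m) (fnat n))
           multprob p n)%:E)%E.
Proof.
move=> hm hrho hc hcost hp hp0 hpd hpd0 hw hwd hP hwdw hrec.
pose G (n : {ffun 'I_(2 ^ m) -> 'I_t.+1}) := if stable (2 ^ m) (fnat n)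
  then recurrence w wd t `&` countev w n else countev w n.
pose D := [set n : {ffun 'I_(2 ^ m) -> 'I_t.+1} | (\sum_(i < 2 ^ m) nat_of_ord (n i))%N == t].
have hG : forall n x, G n x -> countev w n x.
  by move=> n x; rewrite /G; case: ifP => _ // [].
have hE : [set x | ~~ stable (2 ^ m) (ecount w t x) \/ recurrence w wd t x]
          = \bigcup_(n in D) G n.
  apply/seteqP; split => x /=.
    move=> hx.
    pose nx := [ffun i : 'I_(2 ^ m) => (inord (ecount w t x i) : 'I_t.+1)].
    have hnx : countev w nx x.
      by move=> i; rewrite /nx ffunE inordK // ltnS ecount_le.
    exists nx.
      rewrite /D /=; apply/eqP; rewrite -[RHS](sum_ecount t w x).
      by apply: eq_bigr => i _; rewrite (hnx i).
    rewrite /G; case: ifP => hs //.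
    split => //; case: hx => // .
    by rewrite (stable_countev hnx) hs.
  move=> [n _]; rewrite /G; case: ifP => hs.
    by move=> [hr _]; right.
  by move=> hx; left; rewrite (stable_countev hx) hs.
rewrite hE measure_fin_bigcup //; first last.
- move=> n _; rewrite /G; case: ifP => _.
    apply: measurableI; first exact: measurable_rec.
    rewrite countev_eq; apply: fin_bigcup_measurable; first exact: finite_finset.
    by move=> f _; apply: measurable_cyl.
  rewrite countev_eq; apply: fin_bigcup_measurable; first exact: finite_finset.
  by move=> f _; apply: measurable_cyl.
- move=> n n' _ _ [x [/hG hx /hG hx']]; exact: countev_disj hx hx'.
- exact: finite_finset.
rewrite fsbig_fin.
apply: (@le_trans _ _ (\sum_(n : {ffun 'I_(2 ^ m) -> 'I_t.+1}
              | (\sum_(i < 2 ^ m) nat_of_ord (n i))%N == t)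
    (if stable (2 ^ m) (fnat n) then Abound m p (Pdec rho c p) (fnat n) * multprob p n
     else multprob p n)%:E)%E).
  apply: lee_sum => n /eqP hn; rewrite /G; case: ifP => hs.
    apply: le_trans (hrec n hs) _.
    rewrite le_eqVlt; apply/orP; left; apply/eqP; rewrite EFinM; congr (_ * _)%E; exact: (Pcountev hw hP hn).
  rewrite le_eqVlt; apply/orP; left; apply/eqP; exact: (Pcountev hw hP hn).
rewrite sumEFin lee_fin (bigID (fun n => stable (2 ^ m) (fnat n))) /=.
rewrite le_eqVlt; apply/orP; left; apply/eqP; congr (_ + _); apply: eq_bigr => n /andP[_ hs]; by rewrite ?hs // (negbTE hs).
Qed.
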